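(* Let $W_1(u)=\sum_{k\ge0}\omega_ku^{-k}$. Let $A'\in\mathrm{Seq}_{r,t}$ with $a'_1=-1$, $a'_2=1$. Then in $\operatorname{End}(A')[[u^{-1}]]$ $$e_1^{(A')}\frac{1}{u-y_1}e_1^{(A')}=\frac{W_1^*(u)}{u}e_1^{(A')},\qquad\text{where}\qquad \frac{W^*_1(u)}{u}=\frac{W_1(-u)}{u-W_1(-u)}.$$
   Context: Let $r,t\in\mathbb N$. An $(r,t)$-sequence is a sequence $A=(a_1,\dots,a_{r+t})$ that is a permutation of $(1,\dots,1,-1,\dots,-1)$ ($r$ entries $1$, $t$ entries $-1$); $\mathrm{Seq}_{r,t}$ is the set of these, and the simple transpositions $\mathsf s_j=(j,j+1)$ of $S_{r+t}$ act on it by permuting entries. Fix complex numbers $\boldsymbol\omega=(\omega_k)_{k\in\mathbb N}$. The degenerate affine walled Brauer category $\underline{\mathrm{VB}}_{r,t}(\boldsymbol\omega)$ is the $\mathbb C$-linear category with object set $\mathrm{Seq}_{r,t}$ whose morphisms are generated by: endomorphisms $s_i^{(A)}$ of $A$ for $1\le i\le r+t-1$ with $a_i=a_{i+1}$; endomorphisms $e_i^{(A)}$ of $A$ for $1\le i\le r+t-1$ with $a_i\neq a_{i+1}$; endomorphisms $y_i^{(A)}$ of $A$ for $1\le i\le r+t$; and morphisms $\hat s_j^{(A)},\hat e_j^{(A)}:A\to\mathsf s_jA$ whenever $\mathsf s_jA\ne A$. Superscripts are usually omitted; composition $fg$ means $g$ first. A symbol $\dot s_i$ stands for $s_i$ or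 $\hat s_i$ and $\dot e_i$ for $e_i$ or $\hat e_i$; each relation is imposed for all objects and all choices of dotted symbols (possibly different on the two sides) for which both sides are defined morphisms with the same source and target. Relations: (1) $\dot s_i\dot s_i=1$; (2) $\dot s_i\dot s_j=\dot s_j\dot s_i$ for $|i-j|>1$, $\dot s_i\dot s_{i+1}\dot s_i=\dot s_{i+1}\dot s_i\dot s_{i+1}$, $\dot s_iy_j=y_j\dot s_i$ for $j\ne i,i+1$; (3) $(e_i^{(A)})^2=\omega_0e_i^{(A)}$; (4) $e_1^{(A)}y_1^ke_1^{(A)}=\omega_ke_1^{(A)}$ for all $k\in\mathbb N$ when $a_1=1,a_2=-1$; (5) $\dot s_i\dot e_j=\dot e_j\dot s_i$ and $\dot e_i\dot e_j=\dot e_j\dot e_i$ for $|i-j|>1$, $\dot e_iy_j=y_j\dot e_i$ for $j\neq i,i+1$, $y_iy_j=y_jy_i$; (6) $\hat s_i\dot e_i=\dot e_i=\dot e_i\hat s_i$, $\dot s_i\dot e_{i+1}\dot e_i=\dot s_{i+1}\dot e_i$, $\dot e_i\dot e_{i+1}\dot s_i=\dot e_i\dot s_{i+1}$, $\dot e_{i+1}\dot e_i\dot s_{i+1}=\dot e_{i+1}\dot s_i$, $\dot s_{i+1}\dot e_i\dot e_{i+1}=\dot s_i\dot e_{i+1}$, $\dot e_{i+1}\dot e_i\dot e_{i+1}=\dot e_{i+1}$, $\dot e_i\dot e_{i+1}\dot e_i=\dot e_i$; (7) $s_iy_i-y_{i+1}s_i=-1$, $s_iy_{i+1}-y_is_i=1$,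 $\hat s_iy_i-y_{i+1}\hat s_i=\hat e_i$, $\hat s_iy_{i+1}-y_i\hat s_i=-\hat e_i$; (8) $\dot e_i(y_i+y_{i+1})=0=(y_i+y_{i+1})\dot e_i$. Power series: $u$ is a formal variable; one works in $\operatorname{End}(A)[[u^{-1}]]$, with $\frac1{u-y}:=\sum_{k\ge0}y^ku^{-k-1}$; $f(-u)$ denotes substitution $u\mapsto-u$, and quotients are expanded as power series in $u^{-1}$. *)

(* Defs.v *)
From HB Require Import structures.
From mathcomp Require Import all_boot all_order all_algebra.
From Stdlib Require List.
Set Implicit Arguments. Unset Strict Implicit. Unset Printing Implicit Defensive.
Import Order.TTheory GRing.Theory Num.Theory.
Local Open Scope ring_scope.

(* Objects: (r,t)-sequences.  An entry 1 is encoded by [true], an entry   *)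
(* -1 by [false].  Indices are 1-based as in the paper.                    *)

Definition inSeq (r t : nat) (A : seq bool) : bool :=
  (count (fun b : bool => b) A == r) && (count negb A == t).

Definition ent (A : seq bool) (i : nat) : bool := nth false A i.-1.

Definition swapseq (i : nat) (A : seq bool) : seq bool :=
  set_nth false (set_nth false A i.-1 (ent A i.+1)) i (ent A i).

(* Generators.  [gsym] are the actual generators (for a given source     *)
(* object): GS i = s_i, GSh i = \hat s_i, GE i = e_i, GEh i = \hat e_i,   *)
(* GY j = y_j.                                                            *)

Inductive gsym : Type :=
  | GS of nat | GSh of nat | GE of nat | GEh of nat | GY of nat.

Definition gdef (g : gsym) (A : seq bool) : bool :=
  match g with
  | GS i => (0 < i < size A)%N && (ent A i == ent A i.+1)
  | GSh i => (0 < i < size A)%N && (ent A i != ent A i.+1)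
  | GE i => (0 < i < size A)%N && (ent A i != ent A i.+1)
  | GEh i => (0 < i < size A)%N && (ent A i != ent A i.+1)
  | GY j => (0 < j <= size A)%N
  end.

Definition gtgt (g : gsym) (A : seq bool) : seq bool :=
  match g with
  | GSh i | GEh i => swapseq i A
  | _ => A
  end.

(* Symbols appearing in relations: plain ones, plus the dotted ones
   DSd i (= \dot s_i, standing for s_i or \hat s_i) and
   DEd i (= \dot e_i, standing for e_i or \hat e_i). *)
Inductive dsym : Type :=
  | DS of nat | DSh of nat | DSd of nat
  | DE of nat | DEh of nat | DEd of nat | DY of nat.

Definition resolve (x : dsym) : seq gsym :=
  match x with
  | DS i => [:: GS i]
  | DSh i => [:: GSh i]
  | DSd i => [:: GS i; GSh i]
  | DE i => [:: GE i]
  | DEh i => [:: GEh i]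
  | DEd i => [:: GE i; GEh i]
  | DY j => [:: GY j]
  end.

Definition resolve_word (w : seq dsym) : seq (seq gsym) :=
  foldr (fun x acc => [seq g :: v | g <- resolve x, v <- acc]) [:: [::]] w.

(* all choices for the dotted symbols of a linear combination of words
   (each occurrence chosen independently) *)
Definition resolve_comb (F : Type) (c : seq (F * seq dsym))
  : seq (seq (F * seq gsym)) :=
  foldr (fun p acc => [seq (p.1, v) :: rest | v <- resolve_word p.2, rest <- acc])
        [:: [::]] c.

Section Model.
Variables (F : numClosedFieldType) (R : algType F).
Variables (idem : seq bool -> R) (gen : gsym -> seq bool -> R).

(* Evaluation of a word [x1; ...; xk] (meaning the composite x1 ... xk,
   xk applied first) starting at the source object A: returns the target
   object and the morphism, or None if some generator is undefined. *)
Fixpoint evalw (A : seq bool) (w : seq gsym) : option (seq bool * R) :=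
  match w with
  | [::] => Some (A, idem A)
  | x :: w' =>
      match evalw A w' with
      | Some (B, m) => if gdef x B then Some (gtgt x B, gen x B * m) else None
      | None => None
      end
  end.

Definition ends_at (A B : seq bool) (w : seq gsym) : bool :=
  if evalw A w is Some (B', _) then B' == B else false.

Definition combval (A : seq bool) (L : seq (F * seq gsym)) : R :=
  \sum_(p <- L) p.1 *: oapp snd 0 (evalw A p.2).

(* The relation  lhs = rhs  is imposed at the source object A for all
   choices of dotted symbols for which all terms are defined morphisms
   with source A and one common target B. *)
Definition rel_holds (A : seq bool) (lhs rhs : seq (F * seq dsym)) : Prop :=
  forall L, List.In L (resolve_comb lhs) -> forall Rr, List.In Rr (resolve_comb rhs) ->
  forall B, all (fun p => ends_at A B p.2) (L ++ Rr) ->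
  combval A L = combval A Rr.

End Model.

(* A model of the degenerate affine walled Brauer category VB_{r,t}(omega) *)
(* inside an F-algebra R: the object A is represented by an idempotent    *)
(* idem A, a morphism A -> B by an element m with m = idem B * m * idem A, *)
(* composition by multiplication.  gen g A is the generator g^{(A)}.      *)

Definition one_ (F : numClosedFieldType) (w : seq dsym) : seq (F * seq dsym) :=
  [:: (1, w)].

Record is_VB_model (F : numClosedFieldType) (R : algType F) (r t : nat)
    (om : nat -> F) (idem : seq bool -> R) (gen : gsym -> seq bool -> R) : Prop :=
  { idem_idem : forall A, inSeq r t A -> idem A * idem A = idem A;
    idem_orth : forall A B, inSeq r t A -> inSeq r t B -> A != B ->
                  idem A * idem B = 0;
    gen_hom : forall g A, inSeq r t A -> gdef g A ->
                  gen g A = idem (gtgt g A) * gen g A * idem A;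
    rel1 : forall A i, inSeq r t A ->
      rel_holds idem gen A (one_ F [:: DSd i; DSd i]) (one_ F [::]);
    rel2a : forall A i j, inSeq r t A -> (i.+1 < j)%N || (j.+1 < i)%N ->
      rel_holds idem gen A (one_ F [:: DSd i; DSd j]) (one_ F [:: DSd j; DSd i]);
    rel2b : forall A i, inSeq r t A ->
      rel_holds idem gen A (one_ F [:: DSd i; DSd i.+1; DSd i])
                           (one_ F [:: DSd i.+1; DSd i; DSd i.+1]);
    rel2c : forall A i j, inSeq r t A -> j != i -> j != i.+1 ->
      rel_holds idem gen A (one_ F [:: DSd i; DY j]) (one_ F [:: DY j; DSd i]);
    rel3 : forall A i, inSeq r t A ->
      rel_holds idem gen A (one_ F [:: DE i; DE i]) [:: (om 0%N, [:: DE i])];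
    rel4 : forall A k, inSeq r t A -> ent A 1 = true -> ent A 2 = false ->
      rel_holds idem gen A (one_ F ([:: DE 1] ++ nseq k (DY 1) ++ [:: DE 1]))
                           [:: (om k, [:: DE 1])];
    rel5a : forall A i j, inSeq r t A -> (i.+1 < j)%N || (j.+1 < i)%N ->
      rel_holds idem gen A (one_ F [:: DSd i; DEd j]) (one_ F [:: DEd j; DSd i]);
    rel5b : forall A i j, inSeq r t A -> (i.+1 < j)%N || (j.+1 < i)%N ->
      rel_holds idem gen A (one_ F [:: DEd i; DEd j]) (one_ F [:: DEd j; DEd i]);
    rel5c : forall A i j, inSeq r t A -> j != i -> j != i.+1 ->
      rel_holds idem gen A (one_ F [:: DEd i; DY j]) (one_ F [:: DY j; DEd i]);
    rel5d : forall A i j, inSeq r t A ->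
      rel_holds idem gen A (one_ F [:: DY i; DY j]) (one_ F [:: DY j; DY i]);
    rel6a : forall A i, inSeq r t A ->
      rel_holds idem gen A (one_ F [:: DSh i; DEd i]) (one_ F [:: DEd i]);
    rel6b : forall A i, inSeq r t A ->
      rel_holds idem gen A (one_ F [:: DEd i; DSh i]) (one_ F [:: DEd i]);
    rel6c : forall A i, inSeq r t A ->
      rel_holds idem gen A (one_ F [:: DSd i; DEd i.+1; DEd i])
                           (one_ F [:: DSd i.+1; DEd i]);
    rel6d : forall A i, inSeq r t A ->
      rel_holds idem gen A (one_ F [:: DEd i; DEd i.+1; DSd i])
                           (one_ F [:: DEd i; DSd i.+1]);
    rel6e : forall A i, inSeq r t A ->
      rel_holds idem gen A (one_ F [:: DEd i.+1; DEd i; DSd i.+1])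
                           (one_ F [:: DEd i.+1; DSd i]);
    rel6f : forall A i, inSeq r t A ->
      rel_holds idem gen A (one_ F [:: DSd i.+1; DEd i; DEd i.+1])
                           (one_ F [:: DSd i; DEd i.+1]);
    rel6g : forall A i, inSeq r t A ->
      rel_holds idem gen A (one_ F [:: DEd i.+1; DEd i; DEd i.+1])
                           (one_ F [:: DEd i.+1]);
    rel6h : forall A i, inSeq r t A ->
      rel_holds idem gen A (one_ F [:: DEd i; DEd i.+1; DEd i])
                           (one_ F [:: DEd i]);
    rel7a : forall A i, inSeq r t A ->
      rel_holds idem gen A [:: (1, [:: DS i; DY i]); (-1, [:: DY i.+1; DS i])]
                           [:: (-1, [::])];
    rel7b : forall A i, inSeq r t A ->
      rel_holds idem gen A [:: (1, [:: DS i; DY i.+1]); (-1, [:: DY i; DS i])]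
                           [:: (1, [::])];
    rel7c : forall A i, inSeq r t A ->
      rel_holds idem gen A [:: (1, [:: DSh i; DY i]); (-1, [:: DY i.+1; DSh i])]
                           [:: (1, [:: DEh i])];
    rel7d : forall A i, inSeq r t A ->
      rel_holds idem gen A [:: (1, [:: DSh i; DY i.+1]); (-1, [:: DY i; DSh i])]
                           [:: (-1, [:: DEh i])];
    rel8a : forall A i, inSeq r t A ->
      rel_holds idem gen A [:: (1, [:: DEd i; DY i]); (1, [:: DEd i; DY i.+1])] [::];
    rel8b : forall A i, inSeq r t A ->
      rel_holds idem gen A [:: (1, [:: DY i; DEd i]); (1, [:: DY i.+1; DEd i])] [::]
  }.

(* Power series in u^{-1}: q : nat -> F stands for sum_n q n u^{-n}.      *)

(* coefficients of W_1(-u) = sum_k omega_k (-u)^{-k} *)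
Definition W1neg (F : numClosedFieldType) (om : nat -> F) (k : nat) : F :=
  (-1) ^+ k * om k.

(* q = W_1(-u) / (u - W_1(-u)), i.e. q * (u - W_1(-u)) = W_1(-u) as
   Laurent series (coefficient of u^1 and of u^{-n} for all n). *)
Definition is_Wstar_over_u (F : numClosedFieldType) (om : nat -> F)
    (q : nat -> F) : Prop :=
  q 0%N = 0 /\
  forall n : nat,
    q n.+1 - \sum_(i < n.+1) q i * W1neg om (n - i) = W1neg om n.

(* coefficient of u^{-n} in e_1 (1/(u - y_1)) e_1 at object A:
   0 for n = 0, and e_1 y_1^k e_1 for n = k+1. *)
Definition lhs_coef (F : numClosedFieldType) (R : algType F)
    (idem : seq bool -> R) (gen : gsym -> seq bool -> R) (A : seq bool)
    (n : nat) : R :=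
  if n is k.+1 then
    oapp snd 0 (evalw idem gen A ([:: GE 1] ++ nseq k (GY 1) ++ [:: GE 1]))
  else 0.

(* Main.v *)
Require Import Defs.
From HB Require Import structures.
From mathcomp Require Import all_boot all_order all_algebra.
Import GRing.Theory.
Local Open Scope ring_scope.

Lemma expand_pow (F : numClosedFieldType) (R : algType F) (a b : R) (k : nat) :
  (a + b) ^+ k = a ^+ k + \sum_(j < k) (a + b) ^+ j * b * a ^+ (k - j.+1).
Proof.
elim: k => [|k IH]; first by rewrite !expr0 big_ord0 addr0.
rewrite exprSr mulrDr {1}IH mulrDl -exprSr big_ord_recr /= subSS subnn expr0 mulr1.
rewrite mulr_suml -addrA; congr (_ + _); congr (_ + _).
apply: eq_bigr => j _; rewrite subSS -mulrA -exprSr subnSK //.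
Qed.

Section X.
Variables (F : numClosedFieldType) (R : algType F) (r t : nat)
    (om : nat -> F) (idem : seq bool -> R) (gen : gsym -> seq bool -> R).
Hypothesis M : is_VB_model r t om idem gen.

Lemma gR X g : inSeq r t X -> gdef g X -> gen g X * idem X = gen g X.
Proof.
move=> HX Hg; rewrite (gen_hom M HX Hg) -mulrA (idem_idem M HX) //.
Qed.

Lemma gL X g : inSeq r t X -> gdef g X -> inSeq r t (gtgt g X) ->
  idem (gtgt g X) * gen g X = gen g X.
Proof.
move=> HX Hg HB; rewrite (gen_hom M HX Hg) !mulrA (idem_idem M HB) //.
Qed.

Lemma evalw_nseq X w B m g k : evalw idem gen X w = Some (B, m) ->
  gdef g B -> gtgt g B = B ->
  evalw idem gen X (nseq k g ++ w) = Some (B, gen g B ^+ k * m).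
Proof.
move=> Hw Hg Ht; elim: k => [|k IH]; first by rewrite /= Hw expr0 mul1r.
by rewrite /= IH Hg Ht exprS mulrA.
Qed.

Lemma resolve_nseq k :
  resolve_word (nseq k (DY 1) ++ [:: DE 1]) = [:: nseq k (GY 1) ++ [:: GE 1]].
Proof. by elim: k => [|k IH] //=; rewrite IH. Qed.

Variable rest : seq bool.
Let A := true :: false :: rest.
Let A' := false :: true :: rest.
Hypothesis HA' : inSeq r t A'.

Lemma HA : inSeq r t A.
Proof. by move: HA'; rewrite /inSeq /=. Qed.
Local Hint Resolve HA : core.

Let S := gen (GSh 1) A'.
Let T := gen (GSh 1) A.
Let E := gen (GE 1) A.
Let E' := gen (GE 1) A'.
Let Eh := gen (GEh 1) A'.
Let Y1' := gen (GY 1) A'.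
Let Y1 := gen (GY 1) A.
Let Y2 := gen (GY 2) A.

Lemma fa : T * Eh = E'.
Proof.
have := rel6a M (i:=1) HA' (L:=[:: (1, [:: GSh 1; GEh 1])]) _ (Rr:=[:: (1, [:: GE 1])]) _ (B:=A').
rewrite /combval /= !big_cons !big_nil /= !scale1r !addr0 !gR //.
apply => //=; [tauto | tauto | by rewrite /ends_at /= eqxx].
Qed.

Lemma fb : E * S = Eh.
Proof.
have := rel6b M (i:=1) HA' (L:=[:: (1, [:: GE 1; GSh 1])]) _ (Rr:=[:: (1, [:: GEh 1])]) _ (B:=A).
rewrite /combval /= !big_cons !big_nil /= !scale1r !addr0 !gR //.
apply => //=; [tauto | tauto | by rewrite /ends_at /= eqxx].
Qed.

Lemma fc : S * T = idem A.
Proof.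
have := rel1 M (i:=1) HA (L:=[:: (1, [:: GSh 1; GSh 1])]) _ (Rr:=[:: (1, [::])]) _ (B:=A).
rewrite /combval /= !big_cons !big_nil /= !scale1r !addr0 !gR //.
apply => //=; [tauto | tauto | by rewrite /ends_at /= eqxx].
Qed.

Lemma fd : S * Y1' - Y2 * S = Eh.
Proof.
have := rel7c M (i:=1) HA' (L:=[:: (1, [:: GSh 1; GY 1]); (-1, [:: GY 2; GSh 1])]) _ (Rr:=[:: (1, [:: GEh 1])]) _ (B:=A).
rewrite /combval /= !big_cons !big_nil /= !scale1r !addr0 scaleN1r !gR //.
apply => //=; [tauto | tauto | by rewrite /ends_at /= eqxx].
Qed.

Lemma fe : E * Y1 + E * Y2 = 0.
Proof.
have := rel8a M (i:=1) HA (L:=[:: (1, [:: GE 1; GY 1]); (1, [:: GE 1; GY 2])]) _ (Rr:=[::]) _ (B:=A).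
rewrite /combval /= !big_cons !big_nil /= !scale1r !addr0 !gR //; try exact HA.
apply => //=; [tauto | tauto | by rewrite /ends_at /= eqxx].
Qed.

Lemma ff : Y1 * Y2 = Y2 * Y1.
Proof.
have := rel5d M (i:=1) (j:=2) HA (L:=[:: (1, [:: GY 1; GY 2])]) _ (Rr:=[:: (1, [:: GY 2; GY 1])]) _ (B:=A).
rewrite /combval /= !big_cons !big_nil /= !scale1r !addr0 !gR //; try exact HA.
apply => //=; [tauto | tauto | by rewrite /ends_at /= eqxx].
Qed.

Lemma fg k : E * (Y1 ^+ k * E) = om k *: E.
Proof.
have := rel4 M (k:=k) HA erefl erefl (L:=[:: (1, [:: GE 1] ++ nseq k (GY 1) ++ [:: GE 1])]) _ (Rr:=[:: (om k, [:: GE 1])]) _ (B:=A).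
have Hw : evalw idem gen A (nseq k (GY 1) ++ [:: GE 1]) = Some (A, Y1 ^+ k * E).
  by rewrite (@evalw_nseq A [:: GE 1] A E) //= gR.
rewrite /combval /= !big_cons !big_nil /= Hw /= !scale1r !addr0 !gR //.
apply => //=; rewrite ?resolve_nseq //=; try tauto.
by rewrite /ends_at /= Hw /= !eqxx.
Qed.

Lemma iAE : idem A * E = E.
Proof. exact: (@gL A (GE 1)). Qed.

Lemma TiA : T * idem A = T.
Proof. exact: gR. Qed.

Lemma claim1 k : S * Y1' ^+ k * T = (Y2 + E) ^+ k * idem A.
Proof.
elim: k => [|k IH]; first by rewrite expr0 mulr1 fc mul1r.
have h : S * Y1' = (Y2 + E) * S by rewrite mulrDl fb -fd addrC subrK.
by rewrite exprS mulrA h -!mulrA (mulrA S) IH exprS mulrA.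
Qed.

Lemma claim2 j : E * Y2 ^+ j = (-1) ^+ j *: (E * Y1 ^+ j).
Proof.
elim: j => [|j IH]; first by rewrite !expr0 scale1r.
have h : E * Y2 = - (E * Y1) by apply/eqP; rewrite -addr_eq0 addrC fe.
have c : GRing.comm Y2 (Y1 ^+ j) by apply: commrX; rewrite /GRing.comm ff.
rewrite exprSr mulrA IH -scalerAl -mulrA -c mulrA h.
by rewrite mulNr -mulrA -exprS (exprS (-1 : F)) mulN1r scaleNr scalerN.
Qed.

Lemma claim3 j : E * (Y2 ^+ j * E) = W1neg om j *: E.
Proof. by rewrite mulrA claim2 -scalerAl -mulrA fg scalerA. Qed.

Lemma claim4 q : is_Wstar_over_u om q -> forall k,
  E * ((Y2 + E) ^+ k * E) = q k.+1 *: E.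
Proof.
case=> q0 hq; elim/ltn_ind => k IH.
have hk : q k.+1 = W1neg om k + \sum_(i < k) q i.+1 * W1neg om (k - i.+1).
  have := hq k; rewrite big_ord_recl q0 mul0r add0r => /eqP; rewrite subr_eq addrC => /eqP ->.
  by congr (_ + _); apply: eq_bigr => i _; rewrite lift0.
rewrite expand_pow mulrDl mulrDr claim3 hk scalerDl; congr (_ + _).
rewrite mulr_suml mulr_sumr scaler_suml; apply: eq_bigr => i _.
have -> : E * ((Y2 + E) ^+ i * E * Y2 ^+ (k - i.+1) * E)
   = (E * ((Y2 + E) ^+ i * E)) * (Y2 ^+ (k - i.+1) * E) by rewrite !mulrA.
by rewrite IH // -scalerAl claim3 scalerA.
Qed.

Lemma final q : is_Wstar_over_u om q -> forall k,
  E' * (Y1' ^+ k * E') = q k.+1 *: E'.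
Proof.
move=> hq k; rewrite -fa -fb.
have -> : T * (E * S) * (Y1' ^+ k * (T * (E * S)))
   = T * (E * ((S * Y1' ^+ k * T) * E)) * S by rewrite !mulrA.
by rewrite claim1 -(mulrA _ (idem A)) iAE (claim4 _ hq) -scalerAr scalerAl mulrA -!scalerAl.
Qed.

End X.

Fixpoint qs (F : numClosedFieldType) (om : nat -> F) (n : nat) : seq F :=
  if n is m.+1 then
    rcons (qs F om m) (W1neg om m + \sum_(i < m.+1) nth 0 (qs F om m) i * W1neg om (m - i))
  else [:: 0].
Arguments qs {F}.

Lemma size_qs F om n : size (@qs F om n) = n.+1.
Proof. by elim: n => [|n IH] //=; rewrite size_rcons IH. Qed.

Lemma nth_qs F om n i : (i <= n)%N -> nth 0 (@qs F om n) i = nth 0 (qs om i) i.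
Proof.
elim: n => [|n IH]; first by rewrite leqn0 => /eqP ->.
rewrite leq_eqVlt => /orP [/eqP -> // | hi].
by rewrite /= nth_rcons size_qs hi IH.
Qed.

Lemma qs_ex F om : exists q, @is_Wstar_over_u F om q.
Proof.
exists (fun n => nth 0 (qs om n) n); split => // n.
rewrite /= nth_rcons size_qs ltnn eqxx.
rewrite (eq_bigr (fun i : 'I_n.+1 => nth 0 (qs om i) i * W1neg om (n - i))) ?addrK //.
by move=> i _; rewrite nth_qs // -ltnS.
Qed.

Theorem mainTheorem3 (F : numClosedFieldType) (R : algType F) (r t : nat)
    (om : nat -> F) (idem : seq bool -> R) (gen : gsym -> seq bool -> R)
    (A' : seq bool) :
  is_VB_model r t om idem gen ->
  inSeq r t A' -> ent A' 1 = false -> ent A' 2 = true ->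
  (exists q, is_Wstar_over_u om q) /\
  (forall q, is_Wstar_over_u om q ->
     forall n : nat, lhs_coef idem gen A' n = q n *: gen (GE 1) A').
Proof.
move=> M HA' h1 h2; split; first exact: qs_ex.
move=> q hq [|k]; first by case: hq => -> _; rewrite scale0r.
case: A' HA' h1 h2 => [|a [|b rest]] // HA'; rewrite /ent /= => ha hb; subst a b.
have Hw : evalw idem gen [:: false, true & rest] (nseq k (GY 1) ++ [:: GE 1])
  = Some ([:: false, true & rest], gen (GY 1) [:: false, true & rest] ^+ k * gen (GE 1) [:: false, true & rest]).
  by rewrite (@evalw_nseq F R idem gen [:: false, true & rest] [:: GE 1] [:: false, true & rest] (gen (GE 1) [:: false, true & rest]) (GY 1) k) //= (@gR F R r t om idem gen M).
rewrite /lhs_coef /= Hw /=.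
exact: (@final F R r t om idem gen M rest HA' q hq k).
Qed.
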